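(* Suppose $0<a<b$, $c>1$ and $0<\alpha<\alpha_c$. For all real $k\ne0$, with $\xi=k+i\alpha$: (1) $k\,\operatorname{Im}\hat S(\xi)<0$; (2) $\sqrt{a/b}<|\hat S(\xi)|<\hat S(i\alpha)=\sqrt{\frac{1-a\alpha^2}{1-b\alpha^2}}<c$; (3) $|\hat S(\xi)|<1-\frac12\frac{(b-a)(k^2-\alpha^2)}{1+b(k^2-\alpha^2)}$; (4) $i\xi\hat S(\xi)=-\sqrt{-\xi^2\frac{1+a\xi^2}{1+b\xi^2}}$ (principal square root).
   Context: $\alpha_c=\sqrt{(c^2-1)/(bc^2-a)}$. $\hat S(\xi)=\sqrt{\frac{1+a\xi^2}{1+b\xi^2}}$ is the principal-branch square root, which is analytic on the strip $0\le\operatorname{Im}\xi\le\alpha$ when $\alpha<b^{-1/2}$ (there the ratio $\frac{1+a\xi^2}{1+b\xi^2}=\frac ab+(1-\frac ab)\frac1{1+b\xi^2}$ has positive real part). *)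

(* Defs.v *)
From Stdlib Require Import Reals Lra.
Open Scope R_scope.

Definition Cx : Type := (R * R)%type.
Definition Re (z : Cx) : R := fst z.
Definition Im (z : Cx) : R := snd z.
Definition RtoC (x : R) : Cx := (x, 0).
Definition Ci : Cx := (0, 1).
Definition Cadd (z w : Cx) : Cx := (Re z + Re w, Im z + Im w).
Definition Copp (z : Cx) : Cx := (- Re z, - Im z).
Definition Cmul (z w : Cx) : Cx :=
  (Re z * Re w - Im z * Im w, Re z * Im w + Im z * Re w).
Definition Cnorm (z : Cx) : R := sqrt (Re z * Re z + Im z * Im z).
Definition Cinv (z : Cx) : Cx :=
  let d := Re z * Re z + Im z * Im z in (Re z / d, - Im z / d).
Definition Cdiv (z w : Cx) : Cx := Cmul z (Cinv w).

(* Principal branch of the complex square root (argument in (-pi/2, pi/2],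
   branch cut on the negative real axis, where sqrt(x) = i sqrt(-x)). *)
Definition Csqrt (z : Cx) : Cx :=
  (sqrt ((Cnorm z + Re z) / 2),
   (if Rlt_dec (Im z) 0 then -1 else 1) * sqrt ((Cnorm z - Re z) / 2)).

Definition Shat (a b : R) (xi : Cx) : Cx :=
  Csqrt (Cdiv (Cadd (RtoC 1) (Cmul (RtoC a) (Cmul xi xi)))
              (Cadd (RtoC 1) (Cmul (RtoC b) (Cmul xi xi)))).

Definition alpha_c (a b c : R) : R := sqrt ((c ^ 2 - 1) / (b * c ^ 2 - a)).

(* Main.v *)
Require Import Defs.
From Stdlib Require Import Reals Lra Psatz.
Open Scope R_scope.

Lemma sgn_sq (y : R) : (if Rlt_dec y 0 then -1 else 1) * (if Rlt_dec y 0 then -1 else 1) = 1.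
Proof. destruct (Rlt_dec y 0); ring. Qed.

Lemma Cnorm_ge (x y : R) : Rabs x <= sqrt (x*x+y*y).
Proof.
  rewrite <- sqrt_Rsqr_abs. apply sqrt_le_1_alt. unfold Rsqr. nra.
Qed.

Lemma Csqrt_sq z : Cmul (Csqrt z) (Csqrt z) = z.
Proof.
  destruct z as [x y]. unfold Csqrt, Cmul, Cnorm, Re, Im; simpl.
  set (n := sqrt (x*x+y*y)).
  assert (hn : Rabs x <= n) by apply Cnorm_ge.
  assert (hn2 : n * n = x*x+y*y) by (apply sqrt_sqrt; nra).
  assert (hA : 0 <= (n + x)/2) by (pose proof (Rle_abs (-x)); rewrite Rabs_Ropp in H; lra).
  assert (hB : 0 <= (n - x)/2) by (pose proof (Rle_abs x); lra).
  f_equal.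
  - replace (sqrt ((n + x) / 2) * sqrt ((n + x) / 2) -
      (if Rlt_dec y 0 then -1 else 1) * sqrt ((n - x) / 2) *
      ((if Rlt_dec y 0 then -1 else 1) * sqrt ((n - x) / 2)))
      with (sqrt ((n + x) / 2) * sqrt ((n + x) / 2) -
      ((if Rlt_dec y 0 then -1 else 1) * (if Rlt_dec y 0 then -1 else 1)) *
      (sqrt ((n - x) / 2) * sqrt ((n - x) / 2))) by ring.
    rewrite sgn_sq, !sqrt_sqrt by lra. lra.
  - replace (sqrt ((n + x) / 2) * ((if Rlt_dec y 0 then -1 else 1) * sqrt ((n - x) / 2)) +
      (if Rlt_dec y 0 then -1 else 1) * sqrt ((n - x) / 2) * sqrt ((n + x) / 2))
      with (2 * (if Rlt_dec y 0 then -1 else 1) * sqrt ((n + x) / 2 * ((n - x) / 2))).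
    2:{ rewrite sqrt_mult by lra. ring. }
    replace ((n + x) / 2 * ((n - x) / 2)) with (Rsqr (y/2)) by (unfold Rsqr; nra).
    rewrite sqrt_Rsqr_abs.
    destruct (Rlt_dec y 0).
    + rewrite Rabs_left by lra. lra.
    + rewrite Rabs_right by lra. lra.
Qed.

Lemma Cnorm_Csqrt z : Cnorm (Csqrt z) = sqrt (Cnorm z).
Proof.
  destruct z as [x y]. unfold Csqrt, Cnorm, Re, Im; simpl.
  set (n := sqrt (x*x+y*y)).
  assert (hn : Rabs x <= n) by apply Cnorm_ge.
  assert (hA : 0 <= (n + x)/2) by (pose proof (Rle_abs (-x)); rewrite Rabs_Ropp in H; lra).
  assert (hB : 0 <= (n - x)/2) by (pose proof (Rle_abs x); lra).
  f_equal.
  replace ((if Rlt_dec y 0 then -1 else 1) * sqrt ((n - x) / 2) *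
      ((if Rlt_dec y 0 then -1 else 1) * sqrt ((n - x) / 2)))
      with (((if Rlt_dec y 0 then -1 else 1) * (if Rlt_dec y 0 then -1 else 1)) *
      (sqrt ((n - x) / 2) * sqrt ((n - x) / 2))) by ring.
  rewrite sgn_sq, !sqrt_sqrt by lra. lra.
Qed.

Lemma Csqrt_of_sq x y : 0 < x -> Csqrt (Cmul (x,y) (x,y)) = (x,y).
Proof.
  intro hx. unfold Csqrt, Cmul, Cnorm, Re, Im; simpl.
  replace ((x * x - y * y) * (x * x - y * y) + (x * y + y * x) * (x * y + y * x))
    with (Rsqr (x*x+y*y)) by (unfold Rsqr; ring).
  rewrite sqrt_Rsqr by nra.
  replace ((x * x + y * y + (x * x - y * y)) / 2) with (Rsqr x) by (unfold Rsqr; field).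
  replace ((x * x + y * y - (x * x - y * y)) / 2) with (Rsqr y) by (unfold Rsqr; field).
  rewrite sqrt_Rsqr by lra. rewrite sqrt_Rsqr_abs. f_equal.
  destruct (Rlt_dec (x * y + y * x) 0).
  - rewrite Rabs_left by nra. ring.
  - rewrite Rabs_right by nra. ring.
Qed.

Lemma Shat0 (a b alpha : R) : 0 < b -> 0 < a -> a < b -> b * alpha^2 < 1 ->
  Shat a b (0, alpha) = RtoC (sqrt ((1 - a * alpha ^ 2) / (1 - b * alpha ^ 2))).
Proof.
  intros hb ha hab hba.
  unfold Shat.
  set (x := (1 - a * alpha ^ 2) / (1 - b * alpha ^ 2)).
  assert (hx : 0 < x) by (unfold x; apply Rdiv_lt_0_compat; nra).
  replace (Cdiv (Cadd (RtoC 1) (Cmul (RtoC a) (Cmul (0, alpha) (0, alpha))))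
     (Cadd (RtoC 1) (Cmul (RtoC b) (Cmul (0, alpha) (0, alpha))))) with (x, 0).
  2:{ unfold x, Cdiv, Cadd, Cmul, Cinv, RtoC, Re, Im; simpl. f_equal; field; nra. }
  unfold Csqrt, Cnorm, Re, Im, RtoC; simpl.
  replace (x * x + 0 * 0) with (Rsqr x) by (unfold Rsqr; ring).
  rewrite sqrt_Rsqr by lra.
  replace ((x + x)/2) with x by field. replace ((x - x)/2) with 0 by field.
  rewrite sqrt_0. f_equal. ring.
Qed.

Lemma sqrt_lt_sq x y : 0 <= x -> 0 <= y -> x < y * y -> sqrt x < y.
Proof. intros. rewrite <- (sqrt_square y) by lra. apply sqrt_lt_1; nra. Qed.

Lemma div_lt x y D m : 0 < D -> 0 < m -> x * m < y * D -> x / D < y / m.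
Proof.
  intros hD hm h. apply (Rmult_lt_reg_r (D * m)); [nra|].
  replace (x / D * (D * m)) with (x * m) by (field; lra).
  replace (y / m * (D * m)) with (y * D) by (field; lra). lra.
Qed.

Theorem lemma3p1 (a b c alpha : R)
  (ha : 0 < a) (hab : a < b) (hc : 1 < c)
  (hal0 : 0 < alpha) (halc : alpha < alpha_c a b c) :
  forall k : R, k <> 0 ->
  let xi : Cx := (k, alpha) in
  (* (1) *)
  k * Im (Shat a b xi) < 0 /\
  (* (2) *)
  (sqrt (a / b) < Cnorm (Shat a b xi) /\
   Cnorm (Shat a b xi) < Re (Shat a b (0, alpha)) /\
   Shat a b (0, alpha) = RtoC (sqrt ((1 - a * alpha ^ 2) / (1 - b * alpha ^ 2))) /\
   sqrt ((1 - a * alpha ^ 2) / (1 - b * alpha ^ 2)) < c) /\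
  (* (3) *)
  Cnorm (Shat a b xi) <
    1 - / 2 * ((b - a) * (k ^ 2 - alpha ^ 2)) / (1 + b * (k ^ 2 - alpha ^ 2)) /\
  (* (4) *)
  Cmul (Cmul Ci xi) (Shat a b xi) =
    Copp (Csqrt (Cmul (Copp (Cmul xi xi))
                      (Cdiv (Cadd (RtoC 1) (Cmul (RtoC a) (Cmul xi xi)))
                            (Cadd (RtoC 1) (Cmul (RtoC b) (Cmul xi xi)))))).
Proof.
  intros k hk xi. subst xi.
  assert (hb : 0 < b) by lra.
  assert (hc2 : 1 < c ^ 2) by nra.
  assert (hden : 0 < b * c ^ 2 - a) by nra.
  assert (hX : 0 < (c ^ 2 - 1) / (b * c ^ 2 - a)) by (apply Rdiv_lt_0_compat; lra).
  unfold alpha_c in halc.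
  assert (hal2 : alpha ^ 2 * (b * c ^ 2 - a) < c ^ 2 - 1).
  { assert (h1 : alpha * alpha < (c ^ 2 - 1) / (b * c ^ 2 - a)).
    { rewrite <- (sqrt_sqrt ((c ^ 2 - 1) / (b * c ^ 2 - a))) by lra.
      pose proof (sqrt_pos ((c ^ 2 - 1) / (b * c ^ 2 - a))). nra. }
    apply (Rmult_lt_compat_r (b * c ^ 2 - a)) in h1; [|lra].
    assert (hXe : (c ^ 2 - 1) / (b * c ^ 2 - a) * (b * c ^ 2 - a) = c ^ 2 - 1) by (field; lra).
    rewrite hXe in h1. nra. }
  assert (hba : b * alpha ^ 2 < 1) by nra.
  rewrite Shat0 by lra.
  set (e := a / b).
  assert (he0 : 0 < e) by (unfold e; apply Rdiv_lt_0_compat; lra).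
  assert (he1 : e < 1) by (unfold e; apply (Rmult_lt_reg_r b); [lra|]; field_simplify; lra).
  set (u := 1 + b * (k * k - alpha * alpha)).
  set (v := b * (k * alpha + alpha * k)).
  set (m := 1 - b * alpha ^ 2).
  assert (hk2 : 0 < k * k) by nra.
  assert (hm : 0 < m) by (unfold m; lra).
  assert (hmu : m < u) by (unfold m, u; nra).
  assert (hv : v * v > 0).
  { unfold v. replace (b * (k * alpha + alpha * k) * (b * (k * alpha + alpha * k))) with
     (4 * (b*b) * (alpha*alpha) * (k*k)) by ring.
    assert (0 < b*b) by nra. assert (0 < alpha*alpha) by nra.
    apply Rmult_lt_0_compat; [|lra]. apply Rmult_lt_0_compat; lra. }
  set (D := u * u + v * v).
  assert (hD : 0 < D) by (unfold D; nra).
  assert (hN : Cadd (RtoC 1) (Cmul (RtoC a) (Cmul (k, alpha) (k, alpha))) = (e * u + (1 - e), e * v)).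
  { unfold Cadd, Cmul, RtoC, Re, Im, e, u, v; simpl. f_equal; field; lra. }
  assert (hDn : Cadd (RtoC 1) (Cmul (RtoC b) (Cmul (k, alpha) (k, alpha))) = (u, v)).
  { unfold Cadd, Cmul, RtoC, Re, Im, u, v; simpl. f_equal; ring. }
  unfold Shat. rewrite hN, hDn.
  remember (Cdiv (e * u + (1 - e), e * v) (u, v)) as r eqn:Hr.
  assert (hRe : Re r = e + (1 - e) * u / D).
  { rewrite Hr. unfold D, Cdiv, Cmul, Cinv, Re, Im; simpl. field. fold D. lra. }
  assert (hIm : Im r = - ((1 - e) * v) / D).
  { rewrite Hr. unfold D, Cdiv, Cmul, Cinv, Re, Im; simpl. field. fold D. lra. }
  clear Hr. destruct r as [R I]. simpl in hRe, hIm.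
  assert (hRD : R * D = e * D + (1 - e) * u) by (rewrite hRe; field; lra).
  assert (hID : I * D = - ((1 - e) * v)) by (rewrite hIm; field; lra).
  assert (hI0 : I <> 0).
  { intro h0. rewrite h0 in hID. assert (hv0 : v = 0) by nra. rewrite hv0 in hv. lra. }
  assert (hRe0 : e < R).
  { assert (0 < (1 - e) * u) by (apply Rmult_lt_0_compat; lra). nra. }
  set (n := sqrt (R * R + I * I)).
  assert (hn2 : n * n = R * R + I * I) by (apply sqrt_sqrt; nra).
  assert (hn0 : 0 <= n) by apply sqrt_pos.
  assert (hRn : R < n).
  { assert (0 < I * I) by (assert (I*I <> 0) by (apply Rmult_integral_contrapositive; tauto);
       nra). nra. }
  assert (hCn : Cnorm (R, I) = n) by reflexivity.
  assert (hS : Csqrt (R, I) = (sqrt ((n + R) / 2), (if Rlt_dec I 0 then -1 else 1) * sqrt ((n - R) / 2))) by reflexivity.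
  assert (hQ : 0 < sqrt ((n - R) / 2)) by (apply sqrt_lt_R0; lra).
  assert (hP : 0 < sqrt ((n + R) / 2)) by (apply sqrt_lt_R0; lra).
  assert (hNS : Cnorm (Csqrt (R, I)) = sqrt n) by (rewrite Cnorm_Csqrt; reflexivity).
  set (R0 := (1 - a * alpha ^ 2) / (1 - b * alpha ^ 2)).
  assert (hR0 : R0 = e + (1 - e) / m) by (unfold R0, e, m; field; lra).
  assert (hnR0 : n < R0).
  { assert (hA : u / D < 1 / m).
    { apply div_lt; try lra. unfold D. nra. }
    assert (hB : 1 / D < 1 / m * (1 / m)).
    { replace (1 / m * (1 / m)) with (1 / (m * m)) by (field; lra).
      apply div_lt; try nra. unfold D. nra. }
    assert (hsq : R * R + I * I = e * e + 2 * e * (1 - e) * (u / D) + (1 - e) * (1 - e) * (1 / D)).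
    { rewrite hRe, hIm. unfold D. field. fold D. lra. }
    assert (h1 : 0 < e * (1 - e) * (1 / m - u / D)) by (apply Rmult_lt_0_compat; nra).
    assert (h2 : 0 < (1 - e) * (1 - e) * (1 / m * (1 / m) - 1 / D)) by (apply Rmult_lt_0_compat; nra).
    assert (0 < 1 / m) by (apply Rdiv_lt_0_compat; lra).
    unfold n. apply sqrt_lt_sq; [nra| rewrite hR0; unfold Rdiv in *; nra |].
    rewrite hsq, hR0. unfold Rdiv in *. nra. }
  assert (hu : 0 < u) by lra.
  assert (hnU : n < e + (1 - e) / u).
  { assert (hA : u / D < 1 / u).
    { apply div_lt; try lra. unfold D. nra. }
    assert (hB : 1 / D < 1 / u * (1 / u)).
    { replace (1 / u * (1 / u)) with (1 / (u * u)) by (field; lra).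
      apply div_lt; try nra. unfold D. nra. }
    assert (hsq : R * R + I * I = e * e + 2 * e * (1 - e) * (u / D) + (1 - e) * (1 - e) * (1 / D)).
    { rewrite hRe, hIm. unfold D. field. fold D. lra. }
    assert (h1 : 0 < e * (1 - e) * (1 / u - u / D)) by (apply Rmult_lt_0_compat; nra).
    assert (h2 : 0 < (1 - e) * (1 - e) * (1 / u * (1 / u) - 1 / D)) by (apply Rmult_lt_0_compat; nra).
    assert (0 < 1 / u) by (apply Rdiv_lt_0_compat; lra).
    unfold n. apply sqrt_lt_sq; [nra| unfold Rdiv in *; nra |].
    rewrite hsq. unfold Rdiv in *. nra. }
  split; [|split; [|split]].
  -
    rewrite hS. simpl.
    assert (hkv : 0 < k * v).
    { unfold v. replace (k * (b * (k * alpha + alpha * k))) with (2 * b * alpha * (k * k)) by ring.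
      apply Rmult_lt_0_compat; [|lra]. nra. }
    assert (hkI : k * I < 0).
    { assert (0 < k * ((1 - e) * v)) by (replace (k * ((1 - e) * v)) with ((1-e) * (k * v)) by ring;
        apply Rmult_lt_0_compat; lra).
      assert (k * I * D < 0) by (rewrite Rmult_assoc, hID; lra).
      nra. }
    destruct (Rlt_dec I 0); nra.
  -
    rewrite hNS. split; [|split; [|split]].
    + apply sqrt_lt_1; lra.
    + change (sqrt n < sqrt R0). apply sqrt_lt_1; lra.
    + reflexivity.
    + change (sqrt R0 < c). apply sqrt_lt_sq; try lra.
      assert (hm' : R0 * m = 1 - a * alpha ^ 2) by (unfold R0, m; field; lra).
      unfold m in hm'. nra.
  -
    rewrite hNS.
    assert (hsn : sqrt n <= (1 + n) / 2).
    { assert (sqrt n * sqrt n = n) by (apply sqrt_sqrt; lra).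
      assert (0 <= (sqrt n - 1) * (sqrt n - 1)) by apply Rle_0_sqr. nra. }
    replace (1 - / 2 * ((b - a) * (k ^ 2 - alpha ^ 2)) / (1 + b * (k ^ 2 - alpha ^ 2)))
      with ((1 + e) / 2 + (1 - e) / (2 * u)).
    2:{ unfold e, u. field. split; [|lra]. unfold u in hu. intro h0.
        replace (1 + b * (k ^ 2 - alpha ^ 2)) with (1 + b * (k * k - alpha * alpha)) in h0 by ring. lra. }
    replace ((1 + e) / 2 + (1 - e) / (2 * u)) with ((1 + (e + (1 - e) / u)) / 2) by (field; lra).
    lra.
  -
    assert (hkv : 0 < k * v).
    { unfold v. replace (k * (b * (k * alpha + alpha * k))) with (2 * b * alpha * (k * k)) by ring.
      apply Rmult_lt_0_compat; [|lra]. nra. }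
    assert (hkI : k * I < 0).
    { assert (0 < k * ((1 - e) * v)) by (replace (k * ((1 - e) * v)) with ((1-e) * (k * v)) by ring;
        apply Rmult_lt_0_compat; lra).
      assert (k * I * D < 0) by (rewrite Rmult_assoc, hID; lra).
      nra. }
    assert (hkey : k * k * (n - R) < alpha * alpha * (n + R)).
    { destruct (Rle_lt_dec (k * k - alpha * alpha) 0) as [hs|hs].
      - nra.
      - set (s := k * k - alpha * alpha) in *.
        set (t := k * alpha + alpha * k).
        assert (hu1 : u - 1 = b * s) by (unfold u, s; ring).
        assert (hvt : v = b * t) by reflexivity.
        assert (hRD1 : (1 - e) * (u - 1) < R * D).
        { assert (0 < e * D) by nra. rewrite hRD. nra. }
        assert (hRD2 : 0 < (1 - e) * (u - 1)) by (apply Rmult_lt_0_compat; nra).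
        assert (h3 : ((1 - e) * (u - 1)) * ((1 - e) * (u - 1)) < (R * D) * (R * D)) by nra.
        assert (h4 : (u - 1) * (u - 1) * ((I * D) * (I * D)) < v * v * ((R * D) * (R * D))).
        { rewrite hID. replace ((u - 1) * (u - 1) * (- ((1 - e) * v) * - ((1 - e) * v)))
             with (v * v * (((1 - e) * (u - 1)) * ((1 - e) * (u - 1)))) by ring.
          apply Rmult_lt_compat_l; lra. }
        assert (h5 : (u - 1) * (u - 1) * (I * I) < v * v * (R * R)).
        { assert (0 < D * D) by nra.
          apply (Rmult_lt_reg_r (D * D)); [lra|]. nra. }
        rewrite hu1, hvt in h5.
        assert (h6 : s * s * (I * I) < t * t * (R * R)).
        { assert (0 < b * b) by nra.
          apply (Rmult_lt_reg_l (b * b)); [lra|]. nra. }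
        assert (h7 : (s * n) * (s * n) < ((k * k + alpha * alpha) * R) * ((k * k + alpha * alpha) * R)).
        { replace ((s * n) * (s * n)) with (s * s * (n * n)) by ring. rewrite hn2.
          replace ((k * k + alpha * alpha) * R * ((k * k + alpha * alpha) * R)) with
            ((s * s + t * t) * (R * R)) by (unfold s, t; ring). nra. }
        assert (h8 : s * n < (k * k + alpha * alpha) * R).
        { assert (0 < (k * k + alpha * alpha) * R) by (apply Rmult_lt_0_compat; nra).
          nra. }
        unfold s in h8. nra. }
    rewrite hS.
    set (P := sqrt ((n + R) / 2)) in *.
    set (Q := sqrt ((n - R) / 2)) in *.
    set (sg := if Rlt_dec I 0 then -1 else 1).
    assert (hSS : Cmul (P, sg * Q) (P, sg * Q) = (R, I)) by (change (Cmul (Csqrt (R,I)) (Csqrt (R,I)) = (R,I)); apply Csqrt_sq).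
    rewrite <- hSS.
    replace (Cmul (Copp (Cmul (k, alpha) (k, alpha))) (Cmul (P, sg * Q) (P, sg * Q)))
      with (Cmul (alpha * P + k * (sg * Q), alpha * (sg * Q) - k * P)
                 (alpha * P + k * (sg * Q), alpha * (sg * Q) - k * P))
      by (unfold Cmul, Copp, Re, Im; simpl; f_equal; ring).
    rewrite Csqrt_of_sq.
    + unfold Cmul, Copp, Ci, Re, Im; simpl; f_equal; ring.
    + assert (hP2 : P * P = (n + R) / 2) by (apply sqrt_sqrt; lra).
      assert (hQ2 : Q * Q = (n - R) / 2) by (apply sqrt_sqrt; lra).
      assert (hsq : (k * Q) * (k * Q) < (alpha * P) * (alpha * P)) by nra.
      assert (hak : Rabs k * Q < alpha * P).
      { assert (0 < alpha * P) by (apply Rmult_lt_0_compat; lra).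
        assert (0 <= Rabs k * Q) by (apply Rmult_le_pos; [apply Rabs_pos|lra]).
        assert (Rabs k * Rabs k = k * k) by (rewrite <- Rabs_mult; apply Rabs_right; nra).
        nra. }
      unfold sg. destruct (Rlt_dec I 0).
      * assert (0 < k) by nra. rewrite Rabs_right in hak by lra. lra.
      * assert (k < 0) by (destruct (Rtotal_order k 0) as [h|[h|h]]; try lra; nra).
        rewrite Rabs_left in hak by lra. lra.
Qed.
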